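(* Let $a>0$ and let $\theta_0,\theta_1,\theta_2\in\mathbb{R}$ be distinct. In the $(t,x)$-plane consider the points $P_i=\left(\theta_i,\tfrac12 a\theta_i^2\right)$, $i=0,1,2$, on the parabola $x=\tfrac12 at^2$. For $c>0$ equip the plane with the Euclidean inner product $u\cdot v=c^2u_tv_t+u_xv_x$ associated to the metric $ds^2=dx^2+c^2dt^2$, and let $\theta(c)\in[0,\pi/2]$ be the (acute) angle between the chords $P_0P_1$ and $P_0P_2$, defined by $\cos^2(\theta(c))=\frac{(u\cdot v)^2}{(u\cdot u)(v\cdot v)}$ with $u=P_1-P_0$, $v=P_2-P_0$. Then $$\theta(c)^2\sim\frac{a^2}{4c^2}(\theta_1-\theta_2)^2\quad\text{as } c\to\infty,$$ an asymptotic which does not depend on $\theta_0$.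
   Context: The parabola $x=\tfrac12at^2$ is the $c\to\infty$ limit of the ellipses $\left(x-\frac{c^2}{a}\right)^2+c^2t^2=\frac{c^4}{a^2}$, parametrised as $x=\frac{c^2}{a}(1-\cos(a\theta/c))$, $t=\frac{c}{a}\sin(a\theta/c)$; each such ellipse is a metric circle for $ds^2=dx^2+c^2dt^2$. *)

(* Defs.v *)
From Stdlib Require Import Reals.
From Coquelicot Require Import Coquelicot.
Open Scope R_scope.

Definition dotc (c ut ux vt vx : R) : R := c ^ 2 * ut * vt + ux * vx.

Definition parab_x (a th : R) : R := / 2 * a * th ^ 2.

Definition chord_angle (a th0 th1 th2 c : R) : R :=
  let ut := th1 - th0 in
  let ux := parab_x a th1 - parab_x a th0 in
  let vt := th2 - th0 in
  let vx := parab_x a th2 - parab_x a th0 in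
  acos (sqrt ((dotc c ut ux vt vx) ^ 2 /
              (dotc c ut ux ut ux * dotc c vt vx vt vx))).

(* Main.v *)
From Stdlib Require Import Reals Lra.
From Coquelicot Require Import Coquelicot.
Require Import Defs.
Open Scope R_scope.
Lemma cont_lim f (x l : R) : continuity_pt f x -> f x = l -> is_lim f x l.
Proof. intros H <-. now apply is_lim_continuity. Qed.
Lemma cont_test (k : R) : is_lim (fun y => 1/(1+k*y^2)) 0 1.
Proof.
  apply cont_lim. reg. simpl. lra. simpl. field.
Qed.
Lemma lim_utan : is_lim (fun u => u / tan u) 0 1.
Proof.
  apply is_lim_ext with (fun u => cos u / (sin u / u)).
  { intro u. unfold tan, Rdiv. rewrite !Rinv_mult, !Rinv_inv. ring. }
  replace (Finite 1) with (Rbar_div (cos 0) 1).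
  apply is_lim_div. apply cont_lim. reg. reflexivity. apply is_lim_sinc_0.
  simpl. intro H; injection H; lra. simpl. easy.
  rewrite cos_0. simpl. f_equal. field.
Qed.
Lemma lim_atan : is_lim (fun y => atan y / y) 0 1.
Proof.
  apply is_lim_ext with (fun y => atan y / tan (atan y)).
  { intro y. now rewrite tan_atan. }
  apply (is_lim_comp (fun u => u / tan u) atan 0 1 0). apply lim_utan.
  apply cont_lim. apply derivable_continuous_pt, derivable_pt_atan. apply atan_0.
  exists (mkposreal 1 Rlt_0_1). intros y _ Hy H. apply Hy. apply atan_eq0. now injection H.
Qed.
Lemma sq_inj x y : 0 <= x -> 0 <= y -> x^2 = y^2 -> x = y.
Proof. intros; nra. Qed.

Lemma key a th0 th1 th2 c : 0 < a -> th0 <> th1 -> th0 <> th2 -> th1 <> th2 ->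
  0 < c -> 0 < c^2 + (a*(th1+th0)/2)*(a*(th2+th0)/2) ->
  chord_angle a th0 th1 th2 c =
  atan (c * Rabs (a*(th1+th0)/2 - a*(th2+th0)/2) / (c^2 + (a*(th1+th0)/2)*(a*(th2+th0)/2))).
Proof.
  intros ha h01 h02 h12 hc hpq.
  set (p := a*(th1+th0)/2) in *. set (q := a*(th2+th0)/2) in *.
  assert (d1 : th1 - th0 <> 0) by (intro; apply h01; lra).
  assert (d2 : th2 - th0 <> 0) by (intro; apply h02; lra).
  assert (hpq0 : p - q <> 0) by (unfold p, q; intro H; apply h12; nra).
  assert (hp : 0 < c^2 + p^2) by nra.
  assert (hq : 0 < c^2 + q^2) by nra.
  unfold chord_angle.
  set (C := _ / _).
  assert (HC : C = (c^2+p*q)^2/((c^2+p^2)*(c^2+q^2))).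
  { unfold C, dotc, parab_x, p, q. assert (e1 : 0 < (th1-th0)*(th1-th0)) by (apply Rsqr_pos_lt; exact d1).
    assert (e2 : 0 < (th2-th0)*(th2-th0)) by (apply Rsqr_pos_lt; exact d2).
    assert (hc2 : 0 < c^2) by nra.
    field. repeat split; apply Rgt_not_eq; apply Rplus_lt_le_0_compat;
      try (apply Rle_0_sqr); try (apply pow2_ge_0); nra. }
  assert (H1C : 1 - C = c^2*(p-q)^2/((c^2+p^2)*(c^2+q^2))).
  { rewrite HC. field. lra. }
  assert (hpos : 0 < c^2*(p-q)^2) by (apply Rmult_lt_0_compat; [nra| apply pow2_gt_0; auto]).
  assert (HC0 : 0 < C) by (rewrite HC; apply Rdiv_lt_0_compat; nra).
  assert (HC1 : 0 < 1 - C) by (rewrite H1C; apply Rdiv_lt_0_compat; nra).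
  assert (HX : 0 < sqrt C) by (apply sqrt_lt_R0; lra).
  rewrite acos_atan by exact HX. f_equal.
  rewrite Rsqr_sqrt by lra.
  apply sq_inj.
  - apply Rmult_le_pos. apply sqrt_pos. left. apply Rinv_0_lt_compat. lra.
  - apply Rmult_le_pos. apply Rmult_le_pos. lra. apply Rabs_pos. left. apply Rinv_0_lt_compat. lra.
  - unfold Rdiv. rewrite !Rpow_mult_distr, pow2_sqrt by lra.
    rewrite <- Rinv_pow by lra. rewrite pow2_sqrt by lra.
    rewrite <- Rinv_pow by lra. rewrite pow2_abs.
    rewrite H1C, HC. field. lra.
Qed.

Lemma lim_inv0 : is_lim (fun c => / c) p_infty 0.
Proof.
  apply (is_lim_inv (fun c => c) p_infty p_infty). apply is_lim_id. discriminate.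
Qed.

Theorem mainTheorem5 (a th0 th1 th2 : R) :
  0 < a -> th0 <> th1 -> th0 <> th2 -> th1 <> th2 ->
  is_lim (fun c => (chord_angle a th0 th1 th2 c) ^ 2 /
                   (a ^ 2 / (4 * c ^ 2) * (th1 - th2) ^ 2))
         p_infty 1.
Proof.
  intros ha h01 h02 h12.
  set (p := a*(th1+th0)/2). set (q := a*(th2+th0)/2).
  set (e := Rabs (p - q)).
  assert (hpq0 : p - q <> 0) by (unfold p, q; intro H; apply h12; nra).
  assert (he : 0 < e) by (apply Rabs_pos_lt; exact hpq0).
  assert (he2 : e^2 = (p-q)^2) by apply pow2_abs.
  set (T := fun c => c * e / (c^2 + p*q)).
  set (r := fun c => c^2 / (c^2 + p*q)).
  set (A := fun y => atan y / y).
  set (M := 1 + Rabs (p*q)).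
  assert (HM : forall c, M < c -> 0 < c /\ 0 < c^2 + p*q).
  { intros c Hc. unfold M in Hc. pose proof (Rabs_pos (p*q)).
    pose proof (Rle_abs (-(p*q))). rewrite Rabs_Ropp in *. split; nra. }
  apply is_lim_ext_loc with (fun c => (A (T c) * A (T c)) * (r c * r c)).
  { exists M. intros c Hc. destruct (HM c Hc) as [hc hpq].
    unfold T. rewrite key; auto. fold p q e.
    assert (hT : c * e / (c^2+p*q) <> 0).
    { apply Rgt_not_eq. apply Rdiv_lt_0_compat; nra. }
    unfold A, r. set (u := atan _).
    replace ((u / (c*e/(c^2+p*q)) * (u / (c*e/(c^2+p*q)))))
      with (u^2 / (c^2 * e^2 / (c^2+p*q)^2)) by (field; split; lra).
    rewrite he2. unfold p, q. field.
    repeat split; try lra.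
    unfold p, q in hpq; nra. unfold p, q in hpq0; intro H; apply hpq0; lra. }
  replace (Finite 1) with (Rbar_mult (Rbar_mult 1 1) (Rbar_mult 1 1))
    by (simpl; f_equal; ring).
  assert (LT : is_lim T p_infty 0).
  { apply is_lim_ext_loc with (fun c => (fun y => e * y / (1 + p*q*y^2)) (/ c)).
    { exists M. intros c Hc. destruct (HM c Hc) as [hc hpq]. unfold T. field. split; lra. }
    apply (is_lim_comp (fun y => e * y / (1 + p*q*y^2)) (fun c => / c) p_infty 0 0).
    apply cont_lim. reg. simpl; lra. simpl. field. apply lim_inv0.
    exists 0. intros c Hc H. apply (Rinv_neq_0_compat c). lra. now injection H. }
  assert (LR : is_lim r p_infty 1).
  { apply is_lim_ext_loc with (fun c => (fun y => 1 / (1 + p*q*y^2)) (/ c)).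
    { exists M. intros c Hc. destruct (HM c Hc) as [hc hpq]. unfold r. field. split; lra. }
    apply (is_lim_comp (fun y => 1 / (1 + p*q*y^2)) (fun c => / c) p_infty 1 0).
    apply cont_test. apply lim_inv0.
    exists 0. intros c Hc H. apply (Rinv_neq_0_compat c). lra. now injection H. }
  assert (LA : is_lim (fun c => A (T c)) p_infty 1).
  { apply (is_lim_comp A T p_infty 1 0). apply lim_atan. exact LT.
    exists M. intros c Hc H. destruct (HM c Hc) as [hc hpq]. injection H. unfold T.
    apply Rgt_not_eq. apply Rdiv_lt_0_compat; nra. }
  apply is_lim_mult. apply is_lim_mult; auto. easy.
  apply is_lim_mult; auto. easy. easy.
Qed.
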